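(* Let $Q$ be an irreducible transition matrix on a finite set $\Sigma\subset\mathbb{R}$ with invariant distribution $\mu$, let $\gamma\in(0,1)$, and for each $N$ let $\mathbb{P}^{(N)}$ be the law of the Markov chain $\omega=(\omega_n)_{n\ge0}$ on $\Sigma$ with transition matrix $Q^{(N)}=\mathrm{Id}+N^{-\gamma}(Q-\mathrm{Id})$ started from $\mu$ (which is invariant for $Q^{(N)}$). Then for all $\beta\ge0$, $h\in\mathbb{R}$, $$\mathbb{E}^{(N)}\Big[\frac1N\log Z_{N,\beta,h,\omega}\Big]\xrightarrow[N\to\infty]{}\sum_{x\in\Sigma}\mu(x)F(h+\beta x).$$
   Context: $\tau$ is a renewal process with $\tau_0=0$ and interarrival law $K(n)=L(n)n^{-(1+\alpha)}$, $n\ge1$, with $\alpha\ge0$, $L$ positive slowly varying, $\sum_nK(n)=1$; $\delta_n=\mathbf 1_{\{n\in\tau\}}$; $E$ is expectation over $\tau$, and $\omega$ is independent of $\tau$. $Z_{N,\beta,h,\omega}=E\big[\exp\big(\sum_{n=1}^N(\beta\omega_n+h)\delta_n\big)\delta_N\big]$. $F(h):=\lim_{N}\frac1N\log E[\exp(h\sum_{n=1}^N\delta_n)\delta_N]$ is the homogeneous free energy (nonnegative, zero iff $h\le0$). $\mathbb{E}^{(N)}$ is expectation under $\mathbb{P}^{(N)}$. *)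

(* Defs.v *)
From Stdlib Require Import Reals List Lra.
Import ListNotations.
Open Scope R_scope.

Definition sumn (n : nat) (f : nat -> R) : R :=
  fold_right Rplus 0 (map f (seq 0 n)).

Definition slowly_varying (L : R -> R) : Prop :=
  (forall x, 0 < x -> 0 < L x) /\
  (forall c, 0 < c ->
     forall eps, 0 < eps -> exists M, forall x, M < x -> Rabs (L (c * x) / L x - 1) < eps).

Definition Kfun (L : R -> R) (alpha : R) (n : nat) : R :=
  L (INR n) * Rpower (INR n) (- (1 + alpha)).

(* Partition functions E[exp(sum_{n=1}^N w_n delta_n) delta_N], for the
   renewal tau with tau_0 = 0 and interarrival law K, computed by the
   renewal (first-decomposition at the last renewal before N) recursion. *)
Fixpoint Zlist (K : nat -> R) (w : nat -> R) (N : nat) : list R :=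
  match N with
  | O => [1]
  | S n => let l := Zlist K w n in
           l ++ [sumn (S n) (fun j => nth j l 0 * K (S n - j)%nat) * exp (w (S n))]
  end.

Definition Zpart (K : nat -> R) (w : nat -> R) (N : nat) : R :=
  nth N (Zlist K w N) 0.

Definition Z_N (K : nat -> R) (beta h : R) (omega : nat -> R) (N : nat) : R :=
  Zpart K (fun n => beta * omega n + h) N.

Definition Zhom (K : nat -> R) (h : R) (N : nat) : R :=
  Zpart K (fun _ => h) N.

Definition stochastic (m : nat) (Q : nat -> nat -> R) : Prop :=
  (forall i j, (i < m)%nat -> (j < m)%nat -> 0 <= Q i j) /\
  (forall i, (i < m)%nat -> sumn m (fun j => Q i j) = 1).

Fixpoint matpow (m : nat) (Q : nat -> nat -> R) (n : nat) : nat -> nat -> R :=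
  match n with
  | O => fun i j => if Nat.eqb i j then 1 else 0
  | S k => fun i j => sumn m (fun l => matpow m Q k i l * Q l j)
  end.

Definition irreducible (m : nat) (Q : nat -> nat -> R) : Prop :=
  forall i j, (i < m)%nat -> (j < m)%nat -> exists n, 0 < matpow m Q n i j.

Definition invariant_distribution (m : nat) (Q : nat -> nat -> R) (mu : nat -> R) : Prop :=
  (forall i, (i < m)%nat -> 0 <= mu i) /\
  sumn m mu = 1 /\
  (forall j, (j < m)%nat -> sumn m (fun i => mu i * Q i j) = mu j).

Definition QN (Q : nat -> nat -> R) (gamma : R) (N : nat) : nat -> nat -> R :=
  fun i j => (if Nat.eqb i j then 1 else 0)
             + Rpower (INR N) (- gamma) * (Q i j - (if Nat.eqb i j then 1 else 0)).

Fixpoint paths (m n : nat) : list (list nat) :=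
  match n with
  | O => [[]]
  | S k => flat_map (fun p => map (fun i => p ++ [i]) (seq 0 m)) (paths m k)
  end.

Fixpoint path_weight_from (P : nat -> nat -> R) (prev : nat) (p : list nat) : R :=
  match p with
  | [] => 1
  | i :: q => P prev i * path_weight_from P i q
  end.

Definition path_weight (mu : nat -> R) (P : nat -> nat -> R) (p : list nat) : R :=
  match p with
  | [] => 1
  | i0 :: q => mu i0 * path_weight_from P i0 q
  end.

(* Expectation of G(omega_0, ..., omega_N) for the Markov chain on Sigma
   (omega_n = x i_n) started from mu with transition matrix P. *)
Definition markov_expect (m : nat) (x : nat -> R) (mu : nat -> R)
    (P : nat -> nat -> R) (N : nat) (G : (nat -> R) -> R) : R :=
  fold_right Rplus 0
    (map (fun p => path_weight mu P p * G (fun n => x (nth n p 0%nat)))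
         (paths m (S N))).

(* Main.v *)
Require Import Defs.
From Stdlib Require Import Reals List Lra Lia Arith Wf_nat ZArith.
Import ListNotations.
Open Scope R_scope.

Lemma exp_le_m : forall a b, a <= b -> exp a <= exp b.
Proof. intros a b H; destruct H as [H|H]; [left; apply exp_increasing; auto | subst; lra]. Qed.

Lemma ln_le_m : forall a b, 0 < a -> a <= b -> ln a <= ln b.
Proof. intros a b Ha H; destruct H as [H|H]; [left; apply ln_increasing; auto | subst; lra]. Qed.

Lemma sumn_0 : forall f, sumn 0 f = 0.
Proof. reflexivity. Qed.

Lemma fold_map_app : forall (A:Type) (g : A -> R) l1 l2,
  fold_right Rplus 0 (map g (l1 ++ l2)) = fold_right Rplus 0 (map g l1) + fold_right Rplus 0 (map g l2).
Proof. intros A g l1 l2; induction l1; simpl; [lra| rewrite IHl1; lra]. Qed.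

Lemma sumn_S : forall n f, sumn (S n) f = sumn n f + f n.
Proof. intros n f; unfold sumn; rewrite seq_S, fold_map_app; simpl; lra. Qed.

Lemma sumn_ext_lt : forall n f g, (forall i, (i < n)%nat -> f i = g i) -> sumn n f = sumn n g.
Proof. induction n; intros f g H; [reflexivity|]. rewrite !sumn_S, (IHn f g), H; auto; try lia. Qed.

Lemma sumn_le : forall n f g, (forall i, (i < n)%nat -> f i <= g i) -> sumn n f <= sumn n g.
Proof. induction n; intros f g H; [rewrite !sumn_0; lra|]. rewrite !sumn_S.
  assert (f n <= g n) by (apply H; lia). assert (sumn n f <= sumn n g) by (apply IHn; intros; apply H; lia). lra. Qed.

Lemma sumn_nonneg : forall n f, (forall i, (i < n)%nat -> 0 <= f i) -> 0 <= sumn n f.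
Proof. intros n f H. replace 0 with (sumn n (fun _ => 0)). apply sumn_le; auto.
  induction n; [reflexivity| rewrite sumn_S, IHn; [lra| intros; apply H; lia]]. Qed.

Lemma sumn_plus : forall n f g, sumn n (fun i => f i + g i) = sumn n f + sumn n g.
Proof. induction n; intros; [rewrite !sumn_0; lra| rewrite !sumn_S, IHn; lra]. Qed.

Lemma sumn_scal : forall n c f, sumn n (fun i => c * f i) = c * sumn n f.
Proof. induction n; intros; [rewrite !sumn_0; lra| rewrite !sumn_S, IHn; lra]. Qed.

Lemma sumn_const : forall n c, sumn n (fun _ => c) = INR n * c.
Proof. induction n; intros; [rewrite sumn_0; simpl; lra| rewrite sumn_S, IHn, S_INR; lra]. Qed.

Lemma sumn_Sl : forall n f, sumn (S n) f = f 0%nat + sumn n (fun k => f (S k)).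
Proof. induction n; intros f. rewrite sumn_S, !sumn_0; lra.
  rewrite sumn_S, IHn, (sumn_S n); lra. Qed.

Lemma sumn_split : forall a b f, sumn (a + b) f = sumn a f + sumn b (fun k => f (a + k)%nat).
Proof. intros a b f; induction b. rewrite Nat.add_0_r, sumn_0; lra.
  rewrite Nat.add_succ_r, !sumn_S, IHb; lra. Qed.

Lemma sumn_rev : forall n f, sumn n f = sumn n (fun k => f (n - 1 - k)%nat).
Proof. induction n; intros f; [reflexivity|].
  rewrite sumn_Sl, (sumn_S n). rewrite (IHn (fun k => f (S k))).
  replace ((S n) - 1 - n)%nat with 0%nat by lia.
  rewrite (sumn_ext_lt n (fun k => f (S (n - 1 - k))) (fun k => f (S n - 1 - k)%nat)). lra.
  intros; f_equal; lia. Qed.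

Lemma sumn_rev2 : forall n g, sumn n (fun k => g (n - k)%nat) = sumn n (fun k => g (S k)).
Proof. intros n g. rewrite (sumn_rev n (fun k => g (S k))). apply sumn_ext_lt; intros; f_equal; lia. Qed.

Lemma sumn_swap : forall n p (a : nat -> nat -> R),
  sumn n (fun j => sumn p (fun i => a j i)) = sumn p (fun i => sumn n (fun j => a j i)).
Proof. induction n; intros p a. rewrite sumn_0. symmetry. rewrite <- (Rmult_0_l 0) at 1.
  replace (sumn p (fun i => sumn 0 (fun j => a j i))) with (sumn p (fun _ => 0)) by reflexivity.
  rewrite sumn_const; lra.
  rewrite sumn_S, IHn. rewrite <- sumn_plus. apply sumn_ext_lt; intros; rewrite sumn_S; reflexivity. Qed.

Lemma sumn_term_le : forall n f k, (forall i, (i < n)%nat -> 0 <= f i) -> (k < n)%nat -> f k <= sumn n f.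
Proof. induction n; intros f k H Hk; [lia|]. rewrite sumn_S.
  destruct (Nat.eq_dec k n). subst. assert (0 <= sumn n f) by (apply sumn_nonneg; intros; apply H; lia). lra.
  assert (f k <= sumn n f) by (apply IHn; [intros; apply H; lia | lia]). assert (0 <= f n) by (apply H; lia). lra. Qed.

Lemma sumn_indic : forall m j (g : nat -> R), (j < m)%nat ->
  sumn m (fun i => if Nat.eqb i j then g i else 0) = g j.
Proof. induction m; intros j g Hj; [lia|]. rewrite sumn_S.
  destruct (Nat.eq_dec j m). subst. rewrite Nat.eqb_refl.
  rewrite (sumn_ext_lt m _ (fun _ => 0)). rewrite sumn_const; lra.
  intros i Hi; destruct (Nat.eqb_spec i m); [lia|reflexivity].
  rewrite IHm by lia. destruct (Nat.eqb_spec m j); [lia|lra]. Qed.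

Lemma Zlist_len : forall K w n, length (Zlist K w n) = S n.
Proof. intros K w n; induction n; simpl; auto. rewrite length_app, IHn; simpl; lia. Qed.

Lemma Zlist_prefix : forall K w n j, (j <= n)%nat -> nth j (Zlist K w n) 0 = Zpart K w j.
Proof. intros K w n; induction n; intros j Hj.
  - replace j with 0%nat by lia. reflexivity.
  - destruct (Nat.eq_dec j (S n)). subst; reflexivity.
    simpl. rewrite app_nth1 by (rewrite Zlist_len; lia). apply IHn; lia. Qed.

Lemma Zpart_0 : forall K w, Zpart K w 0 = 1.
Proof. reflexivity. Qed.

Lemma Zpart_S : forall K w n,
  Zpart K w (S n) = sumn (S n) (fun j => Zpart K w j * K (S n - j)%nat) * exp (w (S n)).
Proof. intros K w n. unfold Zpart at 1. simpl.
  rewrite app_nth2 by (rewrite Zlist_len; lia). rewrite Zlist_len, Nat.sub_diag. simpl.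
  f_equal. apply sumn_ext_lt. intros i Hi. rewrite Zlist_prefix by lia. reflexivity. Qed.

Definition Kpos (K : nat -> R) := forall n, (1 <= n)%nat -> 0 < K n.

Lemma Zpart_pos : forall K w, Kpos K -> forall n, 0 < Zpart K w n.
Proof. intros K w HK. induction n as [n IH] using lt_wf_ind. destruct n. rewrite Zpart_0; lra.
  rewrite Zpart_S. apply Rmult_lt_0_compat; [|apply exp_pos].
  rewrite sumn_S. assert (0 <= sumn n (fun j => Zpart K w j * K (S n - j)%nat)).
  apply sumn_nonneg; intros i Hi. apply Rmult_le_pos; [left; apply IH; lia| left; apply HK; lia].
  assert (0 < Zpart K w n * K (S n - n)%nat). apply Rmult_lt_0_compat; [apply IH; lia| apply HK; lia]. lra. Qed.

Lemma Zpart_step : forall K w n, Kpos K ->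
  Zpart K w (S n) >= Zpart K w n * K 1%nat * exp (w (S n)).
Proof. intros K w n HK. rewrite Zpart_S, sumn_S. replace (S n - n)%nat with 1%nat by lia.
  assert (0 <= sumn n (fun j => Zpart K w j * K (S n - j)%nat)).
  apply sumn_nonneg; intros i Hi. apply Rmult_le_pos; [left; apply Zpart_pos; auto| left; apply HK; lia].
  assert (0 < exp (w (S n))) by apply exp_pos.
  rewrite Rmult_plus_distr_r. nra. Qed.

Lemma Zpart_ext : forall K w w' N, (forall k, (1 <= k <= N)%nat -> w k = w' k) ->
  forall n, (n <= N)%nat -> Zpart K w n = Zpart K w' n.
Proof. intros K w w' N H. induction n as [n IH] using lt_wf_ind. intros Hn. destruct n. reflexivity.
  rewrite !Zpart_S. rewrite (H (S n)) by lia. f_equal. apply sumn_ext_lt. intros i Hi. rewrite IH; auto; lia. Qed.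

Lemma Zpart_super : forall K w a, Kpos K -> forall l,
  Zpart K w (a + l) >= Zpart K w a * Zpart K (fun n => w (a + n)%nat) l.
Proof. intros K w a HK. induction l as [l IH] using lt_wf_ind. destruct l.
  rewrite Nat.add_0_r, Zpart_0; lra.
  rewrite Nat.add_succ_r, !Zpart_S. rewrite <- Nat.add_succ_r. rewrite sumn_split.
  assert (0 <= sumn a (fun j => Zpart K w j * K (a + S l - j)%nat)).
  apply sumn_nonneg; intros i Hi. apply Rmult_le_pos; [left; apply Zpart_pos; auto| left; apply HK; lia].
  assert (sumn (S l) (fun k => Zpart K w a * (Zpart K (fun n => w (a + n)%nat) k * K (S l - k)%nat))
          <= sumn (S l) (fun k => Zpart K w (a + k) * K (a + S l - (a + k))%nat)).
  apply sumn_le. intros i Hi. replace (a + S l - (a + i))%nat with (S l - i)%nat by lia.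
  rewrite <- Rmult_assoc. apply Rmult_le_compat_r. left; apply HK; lia.
  destruct (Nat.eq_dec i 0). subst. rewrite Nat.add_0_r, Zpart_0; lra.
  apply Rge_le, IH; lia.
  rewrite sumn_scal in H0. assert (0 < exp (w (a + S l)%nat)) by apply exp_pos. nra. Qed.

Lemma nat_big : forall r, exists n : nat, r < INR n.
Proof. intros r. destruct (archimed r) as [H1 _].
  destruct (Z_le_gt_dec 0 (up r)) as [Hz|Hz].
  - exists (Z.to_nat (up r)). rewrite INR_IZR_INZ, Z2Nat.id by lia. lra.
  - exists 0%nat. simpl. assert (IZR (up r) < IZR 0) by (apply IZR_lt; lia). simpl in *. lra. Qed.

Lemma pow2_big : forall j, INR j < 2 ^ j.
Proof. induction j. simpl; lra. rewrite S_INR; simpl.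
  assert (1 <= 2 ^ j) by (apply pow_R1_Rle; lra). lra. Qed.

Lemma finite_pos_lb : forall (y : nat -> R) M, (forall j, (j < M)%nat -> 0 < y j) ->
  exists mu0, 0 < mu0 /\ forall j, (j < M)%nat -> mu0 <= y j.
Proof. intros y M; induction M; intros H. exists 1; split; [lra| intros; lia].
  destruct IHM as [m0 [Hm0 Hm]]. intros; apply H; lia.
  exists (Rmin m0 (y M)). split. apply Rmin_pos; auto; apply H; lia.
  intros j Hj. destruct (Nat.eq_dec j M). subst; apply Rmin_r.
  eapply Rle_trans; [apply Rmin_l| apply Hm; lia]. Qed.

Lemma Un_cv_eventually : forall u l eps, Un_cv u l -> 0 < eps ->
  exists N, forall n, (n >= N)%nat -> l - eps < u n < l + eps.
Proof. intros u l eps H He. destruct (H eps He) as [N HN]. exists N. intros n Hn.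
  specialize (HN n Hn). unfold R_dist in HN. apply Rabs_def2 in HN. lra. Qed.

Section Hom.
Variable K : nat -> R.
Hypothesis HKp : Kpos K.

Lemma hom_series_le : forall c Fc, Un_cv (fun N => ln (Zhom K c N) / INR N) Fc ->
  forall M, sumn M (fun k => K (S k) * exp (c - Fc * INR (S k))) <= 1.
Proof.
  intros c Fc Hcv M. set (g := sumn M (fun k => K (S k) * exp (c - Fc * INR (S k)))).
  destruct (Rle_dec g 1) as [Hg|Hg]; [exact Hg|]. exfalso. apply Rnot_le_lt in Hg.
  destruct M. unfold g in Hg; rewrite sumn_0 in Hg; lra.
  assert (HM : 0 < INR (S M)) by (apply lt_0_INR; lia).
  assert (Hlg : 0 < ln g) by (rewrite <- ln_1; apply ln_increasing; lra).
  set (d := ln g / (2 * INR (S M))).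
  assert (Hd : 0 < d) by (unfold d; apply Rdiv_lt_0_compat; lra).
  assert (HdM : d * INR (S M) = ln g / 2) by (unfold d; field; lra).
  set (t := Fc + d).
  set (g' := sumn (S M) (fun k => K (S k) * exp (c - t * INR (S k)))).
  assert (Hg' : 1 < g').
  { assert (exp (- (ln g / 2)) * g <= g').
    { assert (E : exp (- (ln g / 2)) * g = sumn (S M) (fun k => exp (- (ln g/2)) * (K (S k) * exp (c - Fc * INR (S k)))))
        by (unfold g at 2; rewrite sumn_scal; reflexivity).
      rewrite E. unfold g'. apply sumn_le. intros k Hk.
      assert (0 < K (S k)) by (apply HKp; lia).
      assert (exp (- (ln g / 2)) * exp (c - Fc * INR (S k)) <= exp (c - t * INR (S k))).
      { rewrite <- exp_plus. apply exp_le_m. unfold t. rewrite <- HdM.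
        assert (INR (S k) <= INR (S M)) by (apply le_INR; lia). nra. }
      replace (exp (- (ln g / 2)) * (K (S k) * exp (c - Fc * INR (S k)))) with
        (K (S k) * (exp (- (ln g / 2)) * exp (c - Fc * INR (S k)))) by ring.
      apply Rmult_le_compat_l; lra. }
    assert (exp (- (ln g / 2)) * g = exp (ln g / 2)).
    { rewrite <- (exp_ln g) at 2 by lra. rewrite <- exp_plus. f_equal; lra. }
    assert (1 < exp (ln g / 2)) by (rewrite <- exp_0; apply exp_increasing; lra). lra. }
  destruct (finite_pos_lb (fun j => Zhom K c j * exp (- t * INR j)) (S M)) as [m0 [Hm0 Hm]].
  { intros j _. apply Rmult_lt_0_compat; [apply Zpart_pos; auto| apply exp_pos]. }
  assert (Hlow : forall N, m0 * exp (t * INR N) <= Zhom K c N).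
  { induction N as [N IH] using lt_wf_ind.
    destruct (lt_dec N (S M)) as [HN|HN].
    - specialize (Hm N HN). simpl in Hm.
      apply Rmult_le_compat_r with (r := exp (t * INR N)) in Hm; [|left; apply exp_pos].
      rewrite Rmult_assoc, <- exp_plus in Hm. replace (- t * INR N + t * INR N) with 0 in Hm by ring.
      rewrite exp_0, Rmult_1_r in Hm. exact Hm.
    - destruct N as [|n]; [lia|]. unfold Zhom. rewrite Zpart_S. fold (Zhom K c).
      replace (S n) with ((S n - S M) + S M)%nat at 2 by lia. rewrite sumn_split.
      assert (0 <= sumn (S n - S M) (fun j => Zpart K (fun _ => c) j * K (S n - j)%nat)).
      { apply sumn_nonneg; intros i Hi. apply Rmult_le_pos; [left; apply Zpart_pos; auto| left; apply HKp; lia]. }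
      assert (m0 * exp (t * INR (S n)) * g' <=
              sumn (S M) (fun k => Zpart K (fun _ => c) (S n - S M + k)%nat * K (S n - (S n - S M + k))%nat) * exp c).
      { assert (E2 : g' = sumn (S M) (fun k => K (S M - k)%nat * exp (c - t * INR (S M - k)%nat)))
          by (unfold g'; symmetry; exact (sumn_rev2 (S M) (fun j => K j * exp (c - t * INR j)))).
        rewrite E2. rewrite <- sumn_scal.
        rewrite (Rmult_comm (sumn (S M) _) (exp c)), <- sumn_scal. apply sumn_le. intros k Hk.
        replace (S n - (S n - S M + k))%nat with (S M - k)%nat by lia.
        assert (Hz := IH (S n - S M + k)%nat ltac:(lia)). unfold Zhom in Hz.
        assert (0 < K (S M - k)%nat) by (apply HKp; lia).
        assert (Heq : exp (t * INR (S n)) * exp (c - t * INR (S M - k)) = exp (t * INR (S n - S M + k)) * exp c).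
        { rewrite <- !exp_plus. f_equal.
          assert (INR (S n) = INR (S n - S M + k) + INR (S M - k)) by (rewrite <- plus_INR; f_equal; lia). nra. }
        assert (0 < exp c) by apply exp_pos.
        assert (0 < exp (c - t * INR (S M - k))) by apply exp_pos.
        transitivity (m0 * exp (t * INR (S n - S M + k)) * exp c * K (S M - k)%nat).
        right. replace (m0 * exp (t * INR (S n - S M + k)) * exp c) with (m0 * (exp (t * INR (S n - S M + k)) * exp c)) by ring. rewrite <- Heq. ring.
        apply Rle_trans with (exp c * (m0 * exp (t * INR (S n - S M + k)) * K (S M - k)%nat)). right; ring.
        apply Rmult_le_compat_l; [lra|]. apply Rmult_le_compat_r; [lra | exact Hz]. }
      assert (0 < m0 * exp (t * INR (S n))) by (apply Rmult_lt_0_compat; [lra|apply exp_pos]).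
      assert (0 < exp c) by apply exp_pos.
      nra. }
  destruct (Un_cv_eventually _ _ (d/2) Hcv) as [N1 HN1]. lra.
  destruct (nat_big (2 * Rabs (ln m0) / d)) as [N2 HN2].
  set (N := (N1 + N2 + 1)%nat).
  specialize (HN1 N ltac:(unfold N; lia)). simpl in HN1.
  assert (HNp : 0 < INR N) by (apply lt_0_INR; unfold N; lia).
  assert (HN2' : INR N2 <= INR N) by (apply le_INR; unfold N; lia).
  assert (Hl : ln m0 + t * INR N <= ln (Zhom K c N)).
  { rewrite <- (ln_exp (t * INR N)), <- ln_mult by (auto; apply exp_pos).
    apply ln_le_m; [apply Rmult_lt_0_compat; [lra|apply exp_pos]| apply Hlow]. }
  set (u := ln (Zhom K c N) / INR N) in *.
  assert (Hu : ln (Zhom K c N) = u * INR N) by (unfold u; field; lra).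
  assert (Habs : 2 * Rabs (ln m0) < d * INR N).
  { assert (2 * Rabs (ln m0) / d * d = 2 * Rabs (ln m0)) by (field; lra). nra. }
  assert (- Rabs (ln m0) <= ln m0).
  { destruct (Rcase_abs (ln m0)); [rewrite Rabs_left; lra| rewrite Rabs_right; lra]. }
  unfold t in Hl. nra.
Qed.
End Hom.

Lemma Kfun_pos : forall L alpha, slowly_varying L -> Kpos (Kfun L alpha).
Proof. intros L alpha [HL _] n Hn. unfold Kfun. apply Rmult_lt_0_compat.
  apply HL; apply lt_0_INR; lia. unfold Rpower; apply exp_pos. Qed.

Lemma hom_F_nonneg : forall L alpha, slowly_varying L ->
  forall c Fc, Un_cv (fun N => ln (Zhom (Kfun L alpha) c N) / INR N) Fc -> 0 <= Fc.
Proof.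
  intros L alpha HL c Fc Hcv. set (K := Kfun L alpha).
  assert (HKp : Kpos K) by (apply Kfun_pos; auto).
  destruct (Rle_dec 0 Fc) as [H|H]; [exact H|]. exfalso. apply Rnot_le_lt in H.
  set (a := fun n => K n * exp (- Fc * INR n)).
  assert (Ha : forall n, (1 <= n)%nat -> a n <= exp (- c)).
  { intros n Hn. destruct n; [lia|].
    assert (H1 := hom_series_le K HKp c Fc Hcv (S n)).
    assert (H2 : K (S n) * exp (c - Fc * INR (S n)) <= 1).
    { eapply Rle_trans; [| exact H1]. apply (sumn_term_le (S n) (fun k => K (S k) * exp (c - Fc * INR (S k))) n).
      intros i Hi; apply Rmult_le_pos; [left; apply HKp; lia| left; apply exp_pos]. lia. }
    unfold a. replace (exp (c - Fc * INR (S n))) with (exp c * exp (- Fc * INR (S n))) in H2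
      by (rewrite <- exp_plus; f_equal; ring).
    rewrite exp_Ropp. assert (0 < exp c) by apply exp_pos.
    apply (Rmult_le_reg_l (exp c)); auto. rewrite Rinv_r by lra. nra. }
  destruct HL as [HLp HLs].
  destruct (HLs 2 ltac:(lra) (1/2) ltac:(lra)) as [M0 HM0].
  set (rho := Rpower 2 (- (1 + alpha)) / 2).
  assert (Hrho : 0 < rho) by (unfold rho, Rpower; apply Rdiv_lt_0_compat; [apply exp_pos| lra]).
  assert (HK2 : forall n, (1 <= n)%nat -> M0 < INR n -> rho * K n <= K (2 * n)%nat).
  { intros n Hn HnM. unfold K, Kfun. rewrite mult_INR. replace (INR 2) with 2 by (simpl; lra).
    assert (Hx : 0 < INR n) by (apply lt_0_INR; lia).
    rewrite <- Rpower_mult_distr by lra.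
    specialize (HM0 (INR n) HnM). apply Rabs_def2 in HM0. destruct HM0 as [_ HM0].
    assert (HLn : 0 < L (INR n)) by (apply HLp; auto).
    assert (L (2 * INR n) >= L (INR n) / 2).
    { assert (E : L (2 * INR n) / L (INR n) * L (INR n) = L (2 * INR n)) by (field; lra).
      set (q := L (2 * INR n) / L (INR n)) in *. rewrite <- E.
      assert (0 < (q - 1/2) * L (INR n)) by (apply Rmult_lt_0_compat; lra). lra. }
    unfold rho. assert (0 < Rpower 2 (- (1 + alpha))) by (unfold Rpower; apply exp_pos).
    assert (0 < Rpower (INR n) (- (1 + alpha))) by (unfold Rpower; apply exp_pos).
    apply Rle_trans with (L (INR n) / 2 * (Rpower 2 (- (1 + alpha)) * Rpower (INR n) (- (1 + alpha)))).
    right; field. apply Rmult_le_compat_r; [nra| lra]. }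
  set (r := ln (2 / rho) / (- Fc)).
  destruct (nat_big (Rmax (Rmax M0 r) 0)) as [n1 Hn1].
  assert (Hn1M : M0 < INR n1) by (eapply Rle_lt_trans; [|exact Hn1]; eapply Rle_trans; [apply Rmax_l|apply Rmax_l]).
  assert (Hn1r : r < INR n1) by (eapply Rle_lt_trans; [|exact Hn1]; eapply Rle_trans; [apply Rmax_r|apply Rmax_l]).
  assert (Hn10 : (1 <= n1)%nat) by (destruct n1; [simpl in Hn1; pose proof (Rmax_r (Rmax M0 r) 0); lra| lia]).
  assert (Hdbl : forall n, (n1 <= n)%nat -> 2 * a n <= a (2 * n)%nat).
  { intros n Hn. assert (Hx : INR n1 <= INR n) by (apply le_INR; auto).
    assert (Hexp : 2 / rho <= exp (- Fc * INR n)).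
    { rewrite <- (exp_ln (2 / rho)) by (apply Rdiv_lt_0_compat; lra). apply exp_le_m.
      assert (r * (- Fc) = ln (2 / rho)) by (unfold r; field; lra). nra. }
    unfold a. rewrite mult_INR. replace (INR 2) with 2 by (simpl; lra).
    replace (exp (- Fc * (2 * INR n))) with (exp (- Fc * INR n) * exp (- Fc * INR n)) by (rewrite <- exp_plus; f_equal; ring).
    assert (Hk := HK2 n ltac:(lia) ltac:(lra)).
    assert (0 < K n) by (apply HKp; lia). assert (0 < exp (- Fc * INR n)) by apply exp_pos.
    apply Rle_trans with (rho * K n * (exp (- Fc * INR n) * exp (- Fc * INR n))).
    2: { apply Rmult_le_compat_r; [nra| exact Hk]. }
    assert (2 <= rho * exp (- Fc * INR n)).
    { apply (Rmult_le_compat_l rho) in Hexp; [|lra]. replace (rho * (2 / rho)) with 2 in Hexp by (field; lra). exact Hexp. }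
    apply Rle_trans with ((rho * exp (- Fc * INR n)) * (K n * exp (- Fc * INR n))).
    apply Rmult_le_compat_r; [left; apply Rmult_lt_0_compat; lra| lra]. right; ring. }
  assert (Hj : forall j n, (n1 <= n)%nat -> a n * 2 ^ j <= exp (- c)).
  { induction j; intros n Hn. simpl. rewrite Rmult_1_r. apply Ha; lia.
    simpl. specialize (IHj (2 * n)%nat ltac:(lia)). specialize (Hdbl n Hn).
    assert (0 < 2 ^ j) by (apply pow_lt; lra). nra. }
  assert (Han1 : 0 < a n1) by (unfold a; apply Rmult_lt_0_compat; [apply HKp; lia| apply exp_pos]).
  destruct (nat_big (exp (- c) / a n1)) as [j Hjb].
  specialize (Hj j n1 (le_n _)). assert (Hp := pow2_big j).
  assert (exp (- c) / a n1 * a n1 = exp (- c)) by (field; lra). nra.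
Qed.

Lemma Zhom_lin_lower : forall K c, Kpos K -> forall l, INR l * (ln (K 1%nat) + c) <= ln (Zhom K c l).
Proof. intros K c HK l. induction l. unfold Zhom; rewrite Zpart_0, ln_1; simpl; lra.
  assert (H := Zpart_step K (fun _ => c) l HK). unfold Zhom in *.
  assert (0 < Zpart K (fun _ => c) l) by (apply Zpart_pos; auto).
  assert (0 < K 1%nat) by (apply HK; lia).
  apply Rle_trans with (ln (Zpart K (fun _ => c) l * K 1%nat * exp c)).
  rewrite !ln_mult, ln_exp by (try apply Rmult_lt_0_compat; auto; try apply exp_pos). rewrite S_INR. lra.
  apply ln_le_m; [apply Rmult_lt_0_compat; [apply Rmult_lt_0_compat|apply exp_pos]; auto| apply Rge_le, H]. Qed.

Lemma hom_lower : forall K c Fc, Kpos K -> Un_cv (fun N => ln (Zhom K c N) / INR N) Fc ->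
  forall eps, 0 < eps -> exists D, 0 <= D /\ forall l, (1 <= l)%nat -> INR l * (Fc - eps) - D <= ln (Zhom K c l).
Proof. intros K c Fc HK Hcv eps He. destruct (Un_cv_eventually _ _ eps Hcv He) as [N0 HN0].
  exists (INR N0 * Rabs (Fc - eps - ln (K 1%nat) - c)). split. apply Rmult_le_pos; [apply pos_INR| apply Rabs_pos].
  intros l Hl. destruct (le_lt_dec N0 l) as [H|H].
  - specialize (HN0 l H). assert (0 < INR l) by (apply lt_0_INR; lia).
    assert (ln (Zhom K c l) / INR l * INR l = ln (Zhom K c l)) by (field; lra).
    assert (0 <= INR N0 * Rabs (Fc - eps - ln (K 1%nat) - c)) by (apply Rmult_le_pos; [apply pos_INR| apply Rabs_pos]).
    nra.
  - assert (Hl2 := Zhom_lin_lower K c HK l).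
    assert (INR l <= INR N0) by (apply le_INR; lia).
    assert (Fc - eps - ln (K 1%nat) - c <= Rabs (Fc - eps - ln (K 1%nat) - c)) by apply Rle_abs.
    assert (0 <= Rabs (Fc - eps - ln (K 1%nat) - c)) by apply Rabs_pos.
    assert (0 <= INR l) by apply pos_INR. nra. Qed.

Definition PK (K : nat -> R) (M : nat) := sumn M (fun k => K (S k)).

Lemma PK_sum_f : forall K n, sum_f_R0 (fun k => K (S k)) n = PK K (S n).
Proof. intros K n; induction n. unfold PK; rewrite sumn_S, sumn_0; simpl; lra.
  simpl. rewrite IHn. unfold PK. rewrite (sumn_S (S n)). reflexivity. Qed.

Lemma PK_mono : forall K, Kpos K -> forall a b, (a <= b)%nat -> PK K a <= PK K b.
Proof. intros K HK a b H. unfold PK. replace b with (a + (b - a))%nat by lia. rewrite sumn_split.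
  assert (0 <= sumn (b - a) (fun k => K (S (a + k)))) by (apply sumn_nonneg; intros; left; apply HK; lia). lra. Qed.

Lemma PK_le1 : forall K, Kpos K -> infinite_sum (fun n => K (S n)) 1 -> forall M, PK K M <= 1.
Proof. intros K HK Hs M. destruct (Rle_dec (PK K M) 1) as [H|H]; auto. apply Rnot_le_lt in H.
  destruct (Hs (PK K M - 1) ltac:(lra)) as [N HN]. specialize (HN (N + M)%nat ltac:(lia)).
  rewrite PK_sum_f in HN. unfold Rdist in HN. apply Rabs_def2 in HN.
  assert (PK K M <= PK K (S (N + M))) by (apply PK_mono; auto; lia). lra. Qed.

Lemma PK_to1 : forall K, infinite_sum (fun n => K (S n)) 1 -> forall eps, 0 < eps ->
  exists l0, (1 <= l0)%nat /\ forall l, (l0 <= l)%nat -> 1 - PK K l <= eps.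
Proof. intros K Hs eps He. destruct (Hs eps He) as [N HN]. exists (S N). split; [lia|].
  intros l Hl. destruct l; [lia|]. specialize (HN l ltac:(lia)). rewrite PK_sum_f in HN.
  unfold Rdist in HN. apply Rabs_def2 in HN. lra. Qed.

Fixpoint rs (q : nat -> nat) (N : nat) : nat :=
  match N with
  | O => O
  | S n => match n with
           | O => O
           | S _ => if Nat.eqb (q (S n)) (q n) then rs q n else n
           end
  end.

Definition sw (q : nat -> nat) (N : nat) : R :=
  sumn N (fun k => if Nat.eqb (q (S k)) (q k) then 0 else 1).

Lemma sw_S : forall q n, sw q (S n) = sw q n + (if Nat.eqb (q (S n)) (q n) then 0 else 1).
Proof. intros; unfold sw; rewrite sumn_S; reflexivity. Qed.

Lemma sw_nonneg : forall q n, 0 <= sw q n.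
Proof. intros; unfold sw; apply sumn_nonneg; intros; destruct Nat.eqb; lra. Qed.

Lemma sw_mono : forall q a N, (a <= N)%nat -> sw q a <= sw q N.
Proof. intros q a N H; induction H; [lra|]. rewrite sw_S. destruct Nat.eqb; lra. Qed.

Lemma rs_lt : forall q N, (1 <= N)%nat -> (rs q N < N)%nat.
Proof. intros q N; induction N; intros H; [lia|]. destruct N; simpl; [lia|].
  destruct (Nat.eqb (q (S (S N))) (q (S N))). specialize (IHN ltac:(lia)). simpl in IHN. lia. lia. Qed.

Lemma rs_const : forall q N k, (rs q N < k <= N)%nat -> q k = q N.
Proof. intros q N; induction N; intros k Hk; [lia|]. destruct N.
  simpl in Hk. replace k with 1%nat by lia. reflexivity.
  change (rs q (S (S N))) with (if Nat.eqb (q (S (S N))) (q (S N)) then rs q (S N) else S N) in Hk.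
  destruct (Nat.eqb_spec (q (S (S N))) (q (S N))) as [E|E].
  - destruct (Nat.eq_dec k (S (S N))). subst; reflexivity. rewrite E. apply IHN. lia.
  - replace k with (S (S N)) by lia. reflexivity. Qed.

Lemma sw_rs : forall q N, (1 <= rs q N)%nat -> sw q (rs q N) + 1 <= sw q N.
Proof. intros q N; induction N; intros H; [simpl in H; lia|]. destruct N. simpl in H; lia.
  change (rs q (S (S N))) with (if Nat.eqb (q (S (S N))) (q (S N)) then rs q (S N) else S N) in *.
  rewrite sw_S. destruct (Nat.eqb_spec (q (S (S N))) (q (S N))) as [E|E].
  - specialize (IHN H). lra.
  - lra. Qed.

Lemma finite_choice : forall (P : nat -> R -> Prop) m,
  (forall i D D', D <= D' -> P i D -> P i D') ->
  (forall i, (i < m)%nat -> exists D, 0 <= D /\ P i D) ->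
  exists D, 0 <= D /\ forall i, (i < m)%nat -> P i D.
Proof. intros P m Hmono; induction m; intros H. exists 0; split; [lra| intros; lia].
  destruct IHm as [D1 [HD1 HP1]]. intros; apply H; lia.
  destruct (H m ltac:(lia)) as [D2 [HD2 HP2]].
  exists (Rmax D1 D2). split. eapply Rle_trans; [exact HD1| apply Rmax_l].
  intros i Hi. destruct (Nat.eq_dec i m). subst. eapply Hmono; [apply Rmax_r| exact HP2].
  eapply Hmono; [apply Rmax_l| apply HP1; lia]. Qed.

Lemma finite_ub : forall (g : nat -> R) m, exists B, 1 <= B /\ forall i, (i < m)%nat -> g i <= B.
Proof. intros g m; induction m. exists 1; split; [lra| intros; lia].
  destruct IHm as [B [HB H]]. exists (Rmax B (g m)). split. eapply Rle_trans; [exact HB| apply Rmax_l].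
  intros i Hi. destruct (Nat.eq_dec i m). subst; apply Rmax_r. eapply Rle_trans; [apply H; lia| apply Rmax_l]. Qed.

Section Det.
Variable K : nat -> R.
Hypothesis HKp : Kpos K.
Hypothesis HPK1 : forall M, PK K M <= 1.
Hypothesis HPKto : forall eps, 0 < eps -> exists l0, (1 <= l0)%nat /\ forall l, (l0 <= l)%nat -> 1 - PK K l <= eps.
Variable F : R -> R.
Variable c : nat -> R.
Variable m : nat.
Hypothesis HF0 : forall i, (i < m)%nat -> 0 <= F (c i).
Hypothesis HFser : forall i, (i < m)%nat -> forall M, sumn M (fun k => K (S k) * exp (c i - F (c i) * INR (S k))) <= 1.
Hypothesis HFcv : forall i, (i < m)%nat -> Un_cv (fun N => ln (Zhom K (c i) N) / INR N) (F (c i)).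

Definition Sf (q : nat -> nat) N := sumn N (fun k => F (c (q (S k)))).

Lemma Sf_const : forall q a N, (a <= N)%nat -> (forall k, (a < k <= N)%nat -> q k = q N) ->
  Sf q N = Sf q a + INR (N - a) * F (c (q N)).
Proof. intros q a N H Hc. unfold Sf. replace N with (a + (N - a))%nat at 1 by lia. rewrite sumn_split.
  rewrite (sumn_ext_lt (N - a) _ (fun _ => F (c (q N)))). rewrite sumn_const; lra.
  intros i Hi. rewrite Hc; auto; lia. Qed.

Lemma Sf_mono : forall q, (forall n, (q n < m)%nat) -> forall a N, (a <= N)%nat -> Sf q a <= Sf q N.
Proof. intros q Hq a N H. unfold Sf. replace N with (a + (N - a))%nat by lia. rewrite sumn_split.
  assert (0 <= sumn (N - a) (fun k => F (c (q (S (a + k)))))) by (apply sumn_nonneg; intros; apply HF0; apply Hq). lra. Qed.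

Lemma lower_det : forall eps, 0 < eps -> exists D, 0 <= D /\
  forall q, (forall n, (q n < m)%nat) -> forall N, (1 <= N)%nat ->
  Sf q N - eps * INR N - D * (1 + sw q N) <= ln (Zpart K (fun n => c (q n)) N).
Proof.
  intros eps He.
  destruct (finite_choice (fun i D => forall l, (1 <= l)%nat -> INR l * (F (c i) - eps) - D <= ln (Zhom K (c i) l)) m)
    as [D [HD HPD]].
  { intros i D D' HDD H l Hl. specialize (H l Hl). lra. }
  { intros i Hi. apply hom_lower; auto. }
  exists D. split; auto. intros q Hq N.
  induction N as [N IH] using lt_wf_ind. intros HN.
  set (a := rs q N). assert (Ha : (a < N)%nat) by (apply rs_lt; auto).
  assert (Hc : forall k, (a < k <= N)%nat -> q k = q N) by (intros; apply rs_const; auto).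
  assert (Hsup := Zpart_super K (fun n => c (q n)) a HKp (N - a)).
  replace (a + (N - a))%nat with N in Hsup by lia.
  assert (Hext : Zpart K (fun n => c (q (a + n)%nat)) (N - a) = Zhom K (c (q N)) (N - a)).
  { unfold Zhom. apply (Zpart_ext K _ _ (N - a)); auto. intros k Hk. rewrite Hc; auto; lia. }
  rewrite Hext in Hsup.
  assert (HZa : 0 < Zpart K (fun n => c (q n)) a) by (apply Zpart_pos; auto).
  assert (HZh : 0 < Zhom K (c (q N)) (N - a)) by (apply Zpart_pos; auto).
  assert (Hln : ln (Zpart K (fun n => c (q n)) a) + ln (Zhom K (c (q N)) (N - a)) <= ln (Zpart K (fun n => c (q n)) N)).
  { rewrite <- ln_mult by auto. apply ln_le_m; [apply Rmult_lt_0_compat; auto| apply Rge_le, Hsup]. }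
  assert (Hh := HPD (q N) (Hq N) (N - a)%nat ltac:(lia)).
  assert (HSf := Sf_const q a N ltac:(lia) Hc).
  assert (Hsw0 := sw_nonneg q N).
  assert (HNa : INR (N - a) = INR N - INR a) by (apply minus_INR; lia).
  destruct (Nat.eq_dec a 0) as [Ha0|Ha0].
  - rewrite Ha0 in *. rewrite Zpart_0, ln_1 in Hln. unfold Sf in HSf; rewrite sumn_0 in HSf.
    replace (N - 0)%nat with N in * by lia.
    assert (0 <= D * sw q N) by (apply Rmult_le_pos; auto). unfold Sf. lra.
  - specialize (IH a Ha ltac:(lia)).
    assert (Hsw := sw_rs q N ltac:(unfold a in Ha0; lia)). fold a in Hsw.
    assert (D * (sw q a + 1) <= D * sw q N) by (apply Rmult_le_compat_l; auto).
    rewrite HNa in Hh, HSf. lra.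
Qed.

Variable E : R.
Hypothesis HE1 : 1 <= E.
Hypothesis HE : forall i, (i < m)%nat -> exp (c i) <= E.

Lemma key_sum : forall q, (forall n, (q n < m)%nat) -> forall N, (1 <= N)%nat ->
  sumn N (fun j => exp (Sf q j) * K (N - j)%nat) * exp (c (q N))
  <= exp (Sf q N) * (1 + E * (1 - PK K (N - rs q N))).
Proof.
  intros q Hq N HN. set (a := rs q N). assert (Ha : (a < N)%nat) by (apply rs_lt; auto).
  assert (Hc : forall k, (a < k <= N)%nat -> q k = q N) by (intros; apply rs_const; auto).
  set (l := (N - a)%nat). set (cc := c (q N)). set (f := F cc).
  assert (HcE : exp cc <= E) by (apply HE, Hq).
  assert (HSfN : 0 < exp (Sf q N)) by apply exp_pos.
  replace N with (a + l)%nat at 1 by (unfold l; lia). rewrite sumn_split.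
  rewrite Rmult_plus_distr_r.
  assert (HP1 : sumn a (fun j => exp (Sf q j) * K (N - j)%nat) * exp cc <= exp (Sf q N) * (E * (1 - PK K l))).
  { assert (Hsplit : PK K N = sumn a (fun j => K (N - j)%nat) + PK K l).
    { unfold PK. rewrite <- (sumn_rev2 N K). replace N with (a + l)%nat at 1 by (unfold l; lia).
      rewrite sumn_split. f_equal. rewrite <- (sumn_rev2 l K). apply sumn_ext_lt. intros; f_equal; unfold l; lia. }
    assert (HPN := HPK1 N).
    assert (sumn a (fun j => exp (Sf q j) * K (N - j)%nat) * exp cc <= exp (Sf q N) * E * sumn a (fun j => K (N - j)%nat)).
    { rewrite (Rmult_comm _ (exp cc)), <- sumn_scal. rewrite <- sumn_scal. apply sumn_le. intros j Hj.
      assert (0 < K (N - j)%nat) by (apply HKp; lia).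
      assert (exp (Sf q j) <= exp (Sf q N)) by (apply exp_le_m, Sf_mono; auto; lia).
      assert (0 < exp (Sf q j)) by apply exp_pos. assert (0 < exp cc) by apply exp_pos.
      apply Rle_trans with (exp (Sf q N) * E * K (N - j)%nat); [|right; ring].
      apply Rle_trans with ((exp (Sf q j) * exp cc) * K (N - j)%nat); [right; ring|].
      apply Rmult_le_compat_r; [lra|]. apply Rmult_le_compat; lra. }
    assert (0 <= exp (Sf q N) * E) by nra. nra. }
  assert (HP2 : sumn l (fun k => exp (Sf q (a + k)) * K (N - (a + k))%nat) * exp cc <= exp (Sf q N)).
  { assert (Heq : sumn l (fun k => exp (Sf q (a + k)) * K (N - (a + k))%nat) * exp cc =
                  exp (Sf q N) * sumn l (fun k => K (l - k)%nat * exp (cc - f * INR (l - k)%nat))).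
    { rewrite (Rmult_comm _ (exp cc)), <- !sumn_scal. apply sumn_ext_lt. intros k Hk.
      assert (HS := Sf_const q (a + k) N ltac:(lia) ltac:(intros; apply Hc; lia)).
      replace (N - (a + k))%nat with (l - k)%nat in * by (unfold l; lia). fold cc f in HS.
      rewrite HS, exp_plus. replace (exp (cc - f * INR (l - k))) with (exp cc * / exp (f * INR (l - k))).
      2:{ rewrite <- exp_Ropp, <- exp_plus; f_equal; ring. }
      assert (0 < exp (f * INR (l - k))) by apply exp_pos. rewrite (Rmult_comm (INR (l - k)) f). field. lra. }
    rewrite Heq. rewrite (sumn_rev2 l (fun j => K j * exp (cc - f * INR j))).
    assert (Hs := HFser (q N) (Hq N) l). fold cc f in Hs. nra. }
  nra.
Qed.

Variable eps : R.
Hypothesis Heps : 0 < eps.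
Variable l0 : nat.
Hypothesis Hl0 : (1 <= l0)%nat.
Hypothesis Hl0T : forall l, (l0 <= l)%nat -> E * (1 - PK K l) <= eps.

Definition Phi q N := eps * INR N + E * (INR l0 * sw q N + Rmin (INR (N - rs q N)) (INR l0)).

Lemma T_bounds : forall l, 0 <= 1 - PK K l <= 1.
Proof. intros l. split. assert (H := HPK1 l); lra.
  assert (0 <= PK K l) by (unfold PK; apply sumn_nonneg; intros; left; apply HKp; lia). lra. Qed.

Lemma Phi_step : forall q n, Phi q n + E * (1 - PK K (S n - rs q (S n))) <= Phi q (S n).
Proof. intros q n. assert (HR0 : 1 <= INR l0) by (apply (le_INR 1); auto).
  unfold Phi. rewrite S_INR.
  destruct n.
  - simpl rs. simpl (INR (1 - 0)). simpl (INR (0 - 0)). replace (sw q 0) with 0 by reflexivity.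
    rewrite (Rmin_left 1) by lra. rewrite (Rmin_left 0) by lra.
    assert (Ht := T_bounds (1 - 0)). assert (Hs := sw_nonneg q 1). simpl INR.
    assert (0 <= E * INR l0 * sw q 1) by (apply Rmult_le_pos; [nra| auto]). nra.
  - change (rs q (S (S n))) with (if Nat.eqb (q (S (S n))) (q (S n)) then rs q (S n) else S n).
    rewrite (sw_S q (S n)). assert (Hrs := rs_lt q (S n) ltac:(lia)).
    destruct (Nat.eqb_spec (q (S (S n))) (q (S n))) as [Eq|Eq]; cbv iota.
    + set (r := INR (S n - rs q (S n))).
      assert (Hr : INR (S (S n) - rs q (S n)) = r + 1) by (unfold r; rewrite <- S_INR; f_equal; lia).
      rewrite Hr. assert (Ht := T_bounds (S (S n) - rs q (S n))).
      destruct (Rle_dec (r + 1) (INR l0)) as [Hle|Hlt].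
      * rewrite (Rmin_left (r+1)) by lra. rewrite (Rmin_left r) by lra. nra.
      * apply Rnot_le_lt in Hlt. rewrite (Rmin_right (r+1)) by lra.
        assert (Hl : (l0 <= S (S n) - rs q (S n))%nat).
        { apply INR_le. rewrite Hr. lra. }
        assert (H1 := Hl0T _ Hl). assert (Rmin r (INR l0) <= INR l0) by apply Rmin_r. nra.
    + replace (S (S n) - S n)%nat with 1%nat by lia. simpl (INR 1).
      rewrite (Rmin_left 1) by lra. assert (Ht := T_bounds 1).
      assert (Rmin (INR (S n - rs q (S n))) (INR l0) <= INR l0) by apply Rmin_r. nra.
Qed.

Lemma Phi_mono : forall q a N, (a <= N)%nat -> Phi q a <= Phi q N.
Proof. intros q a N H; induction H; [lra|]. assert (Hs := Phi_step q m0).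
  assert (Ht := T_bounds (S m0 - rs q (S m0))). nra. Qed.

Lemma upper_det : forall q, (forall n, (q n < m)%nat) -> forall N,
  Zpart K (fun n => c (q n)) N <= exp (Sf q N + Phi q N).
Proof.
  intros q Hq N. induction N as [N IH] using lt_wf_ind. destruct N as [|n].
  - rewrite Zpart_0. unfold Sf, Phi. rewrite sumn_0. simpl. replace (sw q 0) with 0 by reflexivity.
    rewrite Rmin_left by (assert (H := pos_INR l0); lra). replace (0 + (eps * 0 + E * (INR l0 * 0 + 0))) with 0 by ring. rewrite exp_0. lra.
  - rewrite Zpart_S.
    assert (H1 : sumn (S n) (fun j => Zpart K (fun n0 => c (q n0)) j * K (S n - j)%nat) * exp (c (q (S n)))
             <= exp (Phi q n) * (sumn (S n) (fun j => exp (Sf q j) * K (S n - j)%nat) * exp (c (q (S n))))).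
    { rewrite <- Rmult_assoc. apply Rmult_le_compat_r; [left; apply exp_pos|].
      rewrite <- sumn_scal. apply sumn_le. intros j Hj.
      assert (0 < K (S n - j)%nat) by (apply HKp; lia).
      rewrite <- Rmult_assoc. apply Rmult_le_compat_r; [lra|].
      rewrite <- exp_plus. eapply Rle_trans; [apply IH; lia|]. apply exp_le_m.
      assert (Phi q j <= Phi q n) by (apply Phi_mono; lia). lra. }
    assert (H2 := key_sum q Hq (S n) ltac:(lia)).
    assert (H3 := Phi_step q n).
    assert (H4 := exp_ineq1_le (E * (1 - PK K (S n - rs q (S n))))).
    assert (Ht := T_bounds (S n - rs q (S n))).
    eapply Rle_trans; [exact H1|].
    apply Rle_trans with (exp (Phi q n) * (exp (Sf q (S n)) * exp (E * (1 - PK K (S n - rs q (S n)))))).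
    + apply Rmult_le_compat_l; [left; apply exp_pos|]. eapply Rle_trans; [exact H2|].
      apply Rmult_le_compat_l; [left; apply exp_pos| lra].
    + rewrite <- !exp_plus. apply exp_le_m. lra.
Qed.

End Det.

Theorem det_bound : forall (K : nat -> R), Kpos K -> (forall M, PK K M <= 1) ->
  (forall eps, 0 < eps -> exists l0, (1 <= l0)%nat /\ forall l, (l0 <= l)%nat -> 1 - PK K l <= eps) ->
  forall (F : R -> R) (c : nat -> R) (m : nat),
  (forall i, (i < m)%nat -> 0 <= F (c i)) ->
  (forall i, (i < m)%nat -> forall M, sumn M (fun k => K (S k) * exp (c i - F (c i) * INR (S k))) <= 1) ->
  (forall i, (i < m)%nat -> Un_cv (fun N => ln (Zhom K (c i) N) / INR N) (F (c i))) ->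
  forall eps, 0 < eps -> exists D, 0 <= D /\
  forall q, (forall n, (q n < m)%nat) -> forall N, (1 <= N)%nat ->
  Rabs (ln (Zpart K (fun n => c (q n)) N) - Sf F c q N) <= eps * INR N + D * (1 + sw q N).
Proof.
  intros K HKp HPK1 HPKto F c m HF0 HFser HFcv eps He.
  destruct (lower_det K HKp F c m HFcv eps He) as [D1 [HD1 Hlow]].
  destruct (finite_ub (fun i => exp (c i)) m) as [E [HE1 HE]].
  destruct (HPKto (eps / E)) as [l0 [Hl0 Hl0T]]. apply Rdiv_lt_0_compat; lra.
  assert (Hl0T' : forall l, (l0 <= l)%nat -> E * (1 - PK K l) <= eps).
  { intros l Hl. specialize (Hl0T l Hl). apply (Rmult_le_compat_l E) in Hl0T; [|lra].
    replace (E * (eps / E)) with eps in Hl0T by (field; lra). exact Hl0T. }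
  exists (Rmax D1 (E * INR l0)). split. eapply Rle_trans; [exact HD1| apply Rmax_l].
  intros q Hq N HN.
  assert (Hup := upper_det K HKp HPK1 F c m HF0 HFser E HE1 HE eps He l0 Hl0 Hl0T' q Hq N).
  assert (Hpos : 0 < Zpart K (fun n => c (q n)) N) by (apply Zpart_pos; auto).
  apply ln_le_m in Hup; auto. rewrite ln_exp in Hup.
  assert (Hl := Hlow q Hq N HN).
  assert (Hsw := sw_nonneg q N).
  assert (HPhi : Phi E eps l0 q N <= eps * INR N + E * INR l0 * (1 + sw q N)).
  { unfold Phi. assert (Rmin (INR (N - rs q N)) (INR l0) <= INR l0) by apply Rmin_r. nra. }
  assert (H1 : D1 * (1 + sw q N) <= Rmax D1 (E * INR l0) * (1 + sw q N)) by (apply Rmult_le_compat_r; [lra| apply Rmax_l]).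
  assert (H2 : E * INR l0 * (1 + sw q N) <= Rmax D1 (E * INR l0) * (1 + sw q N)) by (apply Rmult_le_compat_r; [lra| apply Rmax_r]).
  apply Rabs_le. split; lra.
Qed.

Definition FS {A : Type} (l : list A) (g : A -> R) := fold_right Rplus 0 (map g l).

Lemma FS_app : forall A (l1 l2 : list A) g, FS (l1 ++ l2) g = FS l1 g + FS l2 g.
Proof. intros; unfold FS; apply fold_map_app. Qed.

Lemma FS_flat_map : forall A B (h : A -> list B) l g, FS (flat_map h l) g = FS l (fun a => FS (h a) g).
Proof. intros A B h l g; induction l; [reflexivity|]. simpl. rewrite FS_app, IHl. reflexivity. Qed.

Lemma FS_map : forall A B (k : A -> B) l g, FS (map k l) g = FS l (fun a => g (k a)).
Proof. intros; unfold FS; rewrite map_map; reflexivity. Qed.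

Lemma FS_ext_in : forall A (l : list A) g g', (forall a, In a l -> g a = g' a) -> FS l g = FS l g'.
Proof. intros A l g g' H; induction l; [reflexivity|]. unfold FS in *; simpl. rewrite H by (left; auto).
  rewrite IHl; auto. intros; apply H; right; auto. Qed.

Lemma FS_le_in : forall A (l : list A) g g', (forall a, In a l -> g a <= g' a) -> FS l g <= FS l g'.
Proof. intros A l g g' H; induction l; unfold FS in *; simpl; [lra|].
  assert (g a <= g' a) by (apply H; left; auto). assert (fold_right Rplus 0 (map g l) <= fold_right Rplus 0 (map g' l)).
  apply IHl; intros; apply H; right; auto. lra. Qed.

Lemma FS_plus : forall A (l : list A) g g', FS l (fun a => g a + g' a) = FS l g + FS l g'.
Proof. intros A l g g'; induction l; unfold FS in *; simpl; [lra| rewrite IHl; lra]. Qed.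

Lemma FS_scal : forall A (l : list A) c g, FS l (fun a => c * g a) = c * FS l g.
Proof. intros A l c g; induction l; unfold FS in *; simpl; [lra| rewrite IHl; lra]. Qed.

Lemma FS_seq : forall m g, FS (seq 0 m) g = sumn m g.
Proof. reflexivity. Qed.

Lemma paths_S_FS : forall m k g, FS (paths m (S k)) g = FS (paths m k) (fun p => sumn m (fun i => g (p ++ [i]))).
Proof. intros m k g. simpl. rewrite FS_flat_map. apply FS_ext_in. intros p _. rewrite FS_map. reflexivity. Qed.

Lemma in_paths : forall m k p, In p (paths m k) -> length p = k /\ (forall i, In i p -> (i < m)%nat).
Proof. intros m k; induction k; intros p H.
  - simpl in H. destruct H as [H|H]; [subst; split; [reflexivity| intros i []]| destruct H].
  - simpl in H. apply in_flat_map in H. destruct H as [p0 [Hp0 Hi]]. apply in_map_iff in Hi.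
    destruct Hi as [i [Hpi Hi]]. subst. apply in_seq in Hi. destruct (IHk p0 Hp0) as [Hl Hm].
    split. rewrite length_app; simpl; lia. intros j Hj. apply in_app_or in Hj. destruct Hj as [Hj|Hj]; auto.
    destruct Hj as [Hj|[]]; lia. Qed.

Lemma pwf_app : forall P q prev i,
  path_weight_from P prev (q ++ [i]) = path_weight_from P prev q * P (last (prev :: q) 0%nat) i.
Proof. intros P q; induction q; intros prev i. simpl; ring. change ((a :: q) ++ [i]) with (a :: (q ++ [i])).
  change (path_weight_from P prev (a :: (q ++ [i]))) with (P prev a * path_weight_from P a (q ++ [i])).
  rewrite IHq. change (path_weight_from P prev (a :: q)) with (P prev a * path_weight_from P a q).
  replace (last (prev :: a :: q) 0%nat) with (last (a::q) 0%nat) by (destruct q; reflexivity). ring. Qed.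

Lemma pw_app : forall mu P p i, p <> [] -> path_weight mu P (p ++ [i]) = path_weight mu P p * P (last p 0%nat) i.
Proof. intros mu P p i Hp. destruct p as [|a q]; [congruence|]. change ((a :: q) ++ [i]) with (a :: (q ++ [i])). unfold path_weight. rewrite pwf_app. ring. Qed.

Lemma last_nth : forall (p : list nat) (d : nat), p <> [] -> last p d = nth (length p - 1) p d.
Proof. intros p d Hp. destruct (exists_last Hp) as [p' [a Ha]]. subst. rewrite last_last, length_app. simpl.
  replace (length p' + 1 - 1)%nat with (length p') by lia. rewrite nth_middle. reflexivity. Qed.

Section Markov.
Variable m : nat.
Variable mu : nat -> R.
Variable P : nat -> nat -> R.
Hypothesis Hmu0 : forall i, (i < m)%nat -> 0 <= mu i.
Hypothesis Hmu1 : sumn m mu = 1.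
Hypothesis HP0 : forall i j, (i < m)%nat -> (j < m)%nat -> 0 <= P i j.
Hypothesis HP1 : forall i, (i < m)%nat -> sumn m (fun j => P i j) = 1.
Hypothesis Hinv : forall j, (j < m)%nat -> sumn m (fun i => mu i * P i j) = mu j.

Definition SE k (G : list nat -> R) := FS (paths m k) (fun p => path_weight mu P p * G p).

Lemma pwf_nonneg : forall q prev, (prev < m)%nat -> (forall i, In i q -> (i < m)%nat) -> 0 <= path_weight_from P prev q.
Proof. intros q; induction q; intros prev Hp Hq; simpl; [lra|]. apply Rmult_le_pos.
  apply HP0; auto. apply Hq; left; auto. apply IHq. apply Hq; left; auto. intros; apply Hq; right; auto. Qed.

Lemma pw_nonneg : forall p, (forall i, In i p -> (i < m)%nat) -> 0 <= path_weight mu P p.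
Proof. intros p H. destruct p; simpl; [lra|]. apply Rmult_le_pos. apply Hmu0, H; left; auto.
  apply pwf_nonneg. apply H; left; auto. intros; apply H; right; auto. Qed.

Lemma SE_ext_in : forall k G G', (forall p, In p (paths m k) -> G p = G' p) -> SE k G = SE k G'.
Proof. intros k G G' H. unfold SE. apply FS_ext_in. intros p Hp. rewrite H; auto. Qed.

Lemma SE_le : forall k G G', (forall p, In p (paths m k) -> G p <= G' p) -> SE k G <= SE k G'.
Proof. intros k G G' H. unfold SE. apply FS_le_in. intros p Hp. apply Rmult_le_compat_l; auto.
  apply pw_nonneg. apply (in_paths m k p Hp). Qed.

Lemma SE_plus : forall k G G', SE k (fun p => G p + G' p) = SE k G + SE k G'.
Proof. intros. unfold SE. rewrite <- FS_plus. apply FS_ext_in; intros; ring. Qed.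

Lemma SE_scal : forall k c G, SE k (fun p => c * G p) = c * SE k G.
Proof. intros. unfold SE. rewrite <- FS_scal. apply FS_ext_in; intros; ring. Qed.

Lemma SE_zero : forall k, SE k (fun _ => 0) = 0.
Proof. intros. rewrite (SE_ext_in k _ (fun _ => 0 * 0)) by (intros; ring). rewrite SE_scal. ring. Qed.

Lemma SE_sumn : forall k n (g : nat -> list nat -> R), SE k (fun p => sumn n (fun t => g t p)) = sumn n (fun t => SE k (g t)).
Proof. intros k n g; induction n. rewrite sumn_0. apply SE_zero.
  rewrite sumn_S. rewrite <- IHn, <- SE_plus. apply SE_ext_in. intros; rewrite sumn_S; reflexivity. Qed.

Lemma SE_S : forall k G, (1 <= k)%nat ->
  SE (S k) G = SE k (fun p => sumn m (fun i => P (last p 0%nat) i * G (p ++ [i]))).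
Proof. intros k G Hk. unfold SE. rewrite paths_S_FS. apply FS_ext_in. intros p Hp.
  destruct (in_paths m k p Hp) as [Hl _]. assert (p <> []) by (intro E0; rewrite E0 in Hl; simpl in Hl; lia).
  rewrite <- sumn_scal. apply sumn_ext_lt. intros i _. rewrite pw_app; auto. ring. Qed.

Lemma SE_1 : forall G, SE 1 G = sumn m (fun i => mu i * G [i]).
Proof. intros G. unfold SE. rewrite paths_S_FS. unfold FS. simpl. rewrite Rplus_0_r.
  apply sumn_ext_lt. intros; ring. Qed.

Lemma SE_last : forall k Phi, (1 <= k)%nat -> SE k (fun p => Phi (last p 0%nat)) = sumn m (fun j => mu j * Phi j).
Proof. intros k; induction k; intros Phi Hk; [lia|]. destruct k.
  - rewrite SE_1. reflexivity.
  - rewrite SE_S by lia.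
    rewrite (SE_ext_in _ _ (fun p => (fun j => sumn m (fun i => P j i * Phi i)) (last p 0%nat))).
    2:{ intros p _. apply sumn_ext_lt. intros; rewrite last_last; reflexivity. }
    rewrite (IHk (fun j => sumn m (fun i => P j i * Phi i))) by lia.
    rewrite (sumn_ext_lt m _ (fun j => sumn m (fun i => mu j * P j i * Phi i))).
    2:{ intros; rewrite <- sumn_scal; apply sumn_ext_lt; intros; ring. }
    rewrite sumn_swap. apply sumn_ext_lt. intros i Hi.
    rewrite (sumn_ext_lt m _ (fun j => Phi i * (mu j * P j i))) by (intros; ring).
    rewrite sumn_scal, Hinv by auto. ring. Qed.

Lemma SE_const : forall k c, (1 <= k)%nat -> SE k (fun _ => c) = c.
Proof. intros k c Hk. pose proof (SE_last k (fun _ => c) Hk) as H. cbv beta in H. rewrite H. rewrite (sumn_ext_lt _ _ (fun j => c * mu j)) by (intros; ring).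
  rewrite sumn_scal, Hmu1. ring. Qed.

Lemma SE_marg : forall k G, (1 <= k)%nat -> (forall p i, length p = k -> G (p ++ [i]) = G p) -> SE (S k) G = SE k G.
Proof. intros k G Hk HG. rewrite SE_S by auto. apply SE_ext_in. intros p Hp.
  destruct (in_paths m k p Hp) as [Hl Hm]. assert (p <> []) by (intro E0; rewrite E0 in Hl; simpl in Hl; lia).
  rewrite (sumn_ext_lt _ _ (fun i => G p * P (last p 0%nat) i)) by (intros; rewrite HG; auto; ring).
  rewrite sumn_scal, HP1. ring. apply Hm. destruct (exists_last H) as [p' [a Ha]]. rewrite Ha, last_last.
  apply in_or_app; right; left; auto. Qed.

Lemma SE_marg_iter : forall n G, (forall p i, (S n <= length p)%nat -> G (p ++ [i]) = G p) ->
  forall k, (S n <= k)%nat -> SE k G = SE (S n) G.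
Proof. intros n G HG k Hk. induction Hk. reflexivity. rewrite SE_marg; auto; try lia.
  intros p i Hl; apply HG; lia. Qed.

Lemma SE_pair : forall n (psi : nat -> nat -> R), (1 <= n)%nat ->
  SE (S n) (fun p => psi (nth (n - 1) p 0%nat) (nth n p 0%nat)) = sumn m (fun j => mu j * sumn m (fun i => P j i * psi j i)).
Proof. intros n psi Hn. rewrite SE_S by auto.
  rewrite (SE_ext_in _ _ (fun p => (fun j => sumn m (fun i => P j i * psi j i)) (last p 0%nat))).
  exact (SE_last n (fun j => sumn m (fun i => P j i * psi j i)) Hn).
  intros p Hp. destruct (in_paths m n p Hp) as [Hl _]. assert (p <> []) by (intro E0; rewrite E0 in Hl; simpl in Hl; lia).
  apply sumn_ext_lt. intros i _. rewrite app_nth1 by lia. rewrite <- Hl at 2. rewrite nth_middle.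
  rewrite last_nth by auto. rewrite Hl. reflexivity. Qed.

Lemma SE_pair_N : forall N n (psi : nat -> nat -> R), (1 <= n <= N)%nat ->
  SE (S N) (fun p => psi (nth (n - 1) p 0%nat) (nth n p 0%nat)) = sumn m (fun j => mu j * sumn m (fun i => P j i * psi j i)).
Proof. intros N n psi Hn. rewrite (SE_marg_iter n). apply SE_pair; lia.
  intros p i Hl. rewrite !app_nth1 by lia. reflexivity. lia. Qed.

End Markov.

Lemma sumn_indic1 : forall m j (g : nat -> R), (j < m)%nat ->
  sumn m (fun i => g i * (if Nat.eqb i j then 1 else 0)) = g j.
Proof. intros m j g Hj. rewrite <- (sumn_indic m j g Hj). apply sumn_ext_lt. intros i _.
  destruct (Nat.eqb i j); ring. Qed.

Lemma stat_single : forall m mu (P : nat -> nat -> R),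
  (forall j, (j < m)%nat -> sumn m (fun i => mu i * P i j) = mu j) ->
  forall phi, sumn m (fun j => mu j * sumn m (fun i => P j i * phi i)) = sumn m (fun i => mu i * phi i).
Proof. intros m mu P Hinv phi.
  rewrite (sumn_ext_lt m _ (fun j => sumn m (fun i => mu j * P j i * phi i))).
  2:{ intros; rewrite <- sumn_scal; apply sumn_ext_lt; intros; ring. }
  rewrite sumn_swap. apply sumn_ext_lt. intros i Hi.
  rewrite (sumn_ext_lt m _ (fun j => phi i * (mu j * P j i))) by (intros; ring).
  rewrite sumn_scal, Hinv by auto. ring. Qed.

Lemma nth_lt_m : forall m (p : list nat) n, (0 < m)%nat -> (forall i, In i p -> (i < m)%nat) -> (nth n p 0%nat < m)%nat.
Proof. intros m p n Hm H. destruct (lt_dec n (length p)). apply H, nth_In; auto.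
  rewrite nth_overflow by lia. auto. Qed.

Section QNfacts.
Variable m : nat.
Variable Q : nat -> nat -> R.
Hypothesis HQ : stochastic m Q.
Variable mu : nat -> R.
Hypothesis Hmu : invariant_distribution m Q mu.
Variable t : R.
Hypothesis Ht : 0 < t <= 1.
Definition QNt i j := (if Nat.eqb i j then 1 else 0) + t * (Q i j - (if Nat.eqb i j then 1 else 0)).

Lemma QNt_nonneg : forall i j, (i < m)%nat -> (j < m)%nat -> 0 <= QNt i j.
Proof. intros i j Hi Hj. destruct HQ as [HQ0 _]. specialize (HQ0 i j Hi Hj). unfold QNt.
  destruct (Nat.eqb i j); nra. Qed.

Lemma QNt_row : forall i, (i < m)%nat -> sumn m (fun j => QNt i j) = 1.
Proof. intros i Hi. destruct HQ as [_ HQ1]. unfold QNt. rewrite sumn_plus, sumn_scal.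
  assert (Hind : sumn m (fun j => if Nat.eqb i j then 1 else 0) = 1).
  { rewrite (sumn_ext_lt m _ (fun j => (fun _ => 1) j * (if Nat.eqb j i then 1 else 0))).
    apply sumn_indic1; auto. intros j _. rewrite Nat.eqb_sym. destruct (Nat.eqb j i); ring. }
  rewrite (sumn_ext_lt m (fun j => Q i j - _) (fun j => Q i j + (-1) * (if Nat.eqb i j then 1 else 0))) by (intros; ring).
  rewrite sumn_plus, sumn_scal, Hind, HQ1 by auto. ring. Qed.

Lemma QNt_inv : forall j, (j < m)%nat -> sumn m (fun i => mu i * QNt i j) = mu j.
Proof. intros j Hj. destruct Hmu as [_ [_ Hinv]]. unfold QNt.
  rewrite (sumn_ext_lt m _ (fun i => mu i * (if Nat.eqb i j then 1 else 0) + t * (mu i * Q i j + (-1) * (mu i * (if Nat.eqb i j then 1 else 0))))) by (intros; ring).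
  rewrite sumn_plus, sumn_scal, sumn_plus, sumn_scal, sumn_indic1, Hinv by auto. ring. Qed.

Lemma QNt_switch : forall j, (j < m)%nat -> sumn m (fun i => QNt j i * (if Nat.eqb i j then 0 else 1)) <= t.
Proof. intros j Hj. destruct HQ as [HQ0 HQ1].
  rewrite (sumn_ext_lt m _ (fun i => QNt j i + (-1) * (QNt j i * (if Nat.eqb i j then 1 else 0)))) by (intros; destruct (Nat.eqb i j); ring).
  rewrite sumn_plus, sumn_scal, sumn_indic1 by auto. rewrite QNt_row by auto.
  unfold QNt. rewrite Nat.eqb_refl. assert (0 <= Q j j) by (apply HQ0; auto). nra. Qed.
End QNfacts.

Lemma Rpower_bounds : forall gamma N, 0 < gamma -> (1 <= N)%nat -> 0 < Rpower (INR N) (- gamma) <= 1.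
Proof. intros gamma N Hg HN. unfold Rpower. split. apply exp_pos.
  rewrite <- exp_0. apply exp_le_m. assert (0 <= ln (INR N)).
  { rewrite <- ln_1. apply ln_le_m; [lra|]. apply (le_INR 1); auto. } nra. Qed.

Lemma Rpower_small : forall gamma A, 0 < gamma -> 0 < A -> exists N0, forall N, (N0 <= N)%nat -> Rpower (INR N) (- gamma) <= A.
Proof. intros gamma A Hg HA. set (r := - ln A / gamma).
  destruct (nat_big (exp r)) as [N0 HN0]. exists N0. intros N HN.
  assert (HN0p : 0 < INR N0) by (pose proof (exp_pos r); lra).
  assert (HNN : INR N0 <= INR N) by (apply le_INR; auto).
  unfold Rpower. rewrite <- (exp_ln A) by auto. apply exp_le_m.
  assert (r < ln (INR N)).
  { rewrite <- (ln_exp r). apply Rlt_le_trans with (ln (INR N0)). apply ln_increasing; auto. apply exp_pos.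
    apply ln_le_m; auto. }
  assert (r * gamma = - ln A) by (unfold r; field; lra). nra. Qed.

Theorem mainTheorem6
  (L : R -> R) (alpha : R)
  (Halpha : 0 <= alpha)
  (HL : slowly_varying L)
  (HK : infinite_sum (fun n => Kfun L alpha (S n)) 1)
  (F : R -> R)
  (HF : forall h : R,
        Un_cv (fun N => ln (Zhom (Kfun L alpha) h N) / INR N) (F h))
  (m : nat) (Hm : (0 < m)%nat)
  (x : nat -> R)
  (Hx : forall i j, (i < m)%nat -> (j < m)%nat -> x i = x j -> i = j)
  (Q : nat -> nat -> R)
  (HQ : stochastic m Q) (HQirr : irreducible m Q)
  (mu : nat -> R) (Hmu : invariant_distribution m Q mu)
  (gamma : R) (Hgamma : 0 < gamma < 1)
  (beta h : R) (Hbeta : 0 <= beta) :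
  Un_cv
    (fun N => markov_expect m x mu (QN Q gamma N) N
                (fun omega => ln (Z_N (Kfun L alpha) beta h omega N) / INR N))
    (sumn m (fun i => mu i * F (h + beta * x i))).
Proof.
  intros eps Heps.
  set (K := Kfun L alpha).
  assert (HKp : Kpos K) by (apply Kfun_pos; auto).
  set (c := fun i => beta * x i + h).
  assert (HF0 : forall i, (i < m)%nat -> 0 <= F (c i)) by (intros; apply (hom_F_nonneg L alpha HL (c i)), HF).
  assert (HFser : forall i, (i < m)%nat -> forall M, sumn M (fun k => K (S k) * exp (c i - F (c i) * INR (S k))) <= 1)
    by (intros; apply hom_series_le; auto).
  assert (HFcv : forall i, (i < m)%nat -> Un_cv (fun N => ln (Zhom K (c i) N) / INR N) (F (c i))) by (intros; apply HF).
  destruct (det_bound K HKp (PK_le1 K HKp HK) (PK_to1 K HK) F c m HF0 HFser HFcv (eps / 4) ltac:(lra))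
    as [D [HD Hdet]].
  destruct (nat_big (4 * D / eps)) as [N1 HN1].
  destruct (Rpower_small gamma (eps / (4 * (D + 1))) ltac:(lra)) as [N2 HN2].
  { apply Rdiv_lt_0_compat; lra. }
  exists (N1 + N2 + 1)%nat. intros N HN.
  set (t := Rpower (INR N) (- gamma)).
  assert (Ht : 0 < t <= 1) by (apply Rpower_bounds; lra || lia).
  assert (HtS : t <= eps / (4 * (D + 1))) by (apply HN2; lia).
  assert (HNp : 0 < INR N) by (apply lt_0_INR; lia).
  assert (HN1' : INR N1 <= INR N) by (apply le_INR; lia).
  destruct Hmu as [Hmu0 [Hmu1 Hinv]].
  assert (Hmu' : invariant_distribution m Q mu) by (split; [|split]; auto).
  set (P := QNt Q t).
  assert (HP0 : forall i j, (i < m)%nat -> (j < m)%nat -> 0 <= P i j) by (intros; apply (QNt_nonneg m); auto).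
  assert (HP1 : forall i, (i < m)%nat -> sumn m (fun j => P i j) = 1) by (intros; apply (QNt_row m); auto).
  assert (HPinv : forall j, (j < m)%nat -> sumn m (fun i => mu i * P i j) = mu j) by (intros; apply (QNt_inv m); auto).
  set (G := fun p : list nat => ln (Zpart K (fun n => c (nth n p 0%nat)) N) / INR N).
  change (Rdist (SE m mu P (S N) G) (sumn m (fun i => mu i * F (h + beta * x i))) < eps).
  set (A := fun p : list nat => / INR N * sumn N (fun k => F (c (nth (S k) p 0%nat)))).
  set (B := fun p : list nat => sumn N (fun k => if Nat.eqb (nth (S k) p 0%nat) (nth k p 0%nat) then 0 else 1)).
  set (e := eps / 4 + D / INR N).
  assert (Hpt : forall p, In p (paths m (S N)) -> A p - e - D / INR N * B p <= G p <= A p + e + D / INR N * B p).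
  { intros p Hp. destruct (in_paths m (S N) p Hp) as [_ Hin].
    assert (Hq : forall n, (nth n p 0%nat < m)%nat) by (intros; apply nth_lt_m; auto).
    specialize (Hdet (fun n => nth n p 0%nat) Hq N ltac:(lia)).
    unfold Sf, sw in Hdet. fold (B p) in Hdet.
    set (X := ln (Zpart K (fun n => c (nth n p 0%nat)) N)) in *.
    set (Y := sumn N (fun k => F (c (nth (S k) p 0%nat)))) in *.
    assert (HG : G p = X / INR N) by reflexivity. assert (HA : A p = Y / INR N) by (unfold A; fold Y; field; lra).
    assert (Hdet' : -(eps/4*INR N + D*(1+B p)) <= X - Y <= eps/4*INR N + D*(1+B p)).
    { pose proof (Rle_abs (X-Y)) as W1. pose proof (Rle_abs (-(X-Y))) as W2. rewrite Rabs_Ropp in W2. lra. }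
    clear Hdet. rewrite HG, HA. unfold e.
    assert (E1 : (eps / 4 * INR N + D * (1 + B p)) / INR N = eps / 4 + D / INR N + D / INR N * B p) by (field; lra).
    assert (E2 : X / INR N - Y / INR N = (X - Y) / INR N) by (field; lra).
    assert (Hl : (- (eps / 4 * INR N + D * (1 + B p))) / INR N <= (X - Y) / INR N).
    { unfold Rdiv; apply Rmult_le_compat_r; [left; apply Rinv_0_lt_compat; auto| lra]. }
    assert (Hr : (X - Y) / INR N <= (eps / 4 * INR N + D * (1 + B p)) / INR N).
    { unfold Rdiv; apply Rmult_le_compat_r; [left; apply Rinv_0_lt_compat; auto| lra]. }
    assert (E3 : (- (eps / 4 * INR N + D * (1 + B p))) / INR N = - (eps / 4 + D / INR N + D / INR N * B p)) by (field; lra).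
    lra. }
  set (T := sumn m (fun i => mu i * F (c i))).
  assert (HSA : SE m mu P (S N) A = T).
  { unfold A. rewrite SE_scal, SE_sumn.
    rewrite (sumn_ext_lt N _ (fun _ => T)).
    rewrite sumn_const. field. lra.
    intros k Hk. pose proof (SE_pair_N m mu P HP1 HPinv N (S k) (fun _ i => F (c i)) ltac:(lia)) as H.
    replace (S k - 1)%nat with k in H by lia. cbv beta in H. rewrite H.
    apply stat_single; auto. }
  assert (HSB : SE m mu P (S N) B <= INR N * t).
  { unfold B. rewrite SE_sumn. rewrite <- sumn_const. apply sumn_le. intros k Hk.
    pose proof (SE_pair_N m mu P HP1 HPinv N (S k) (fun j i => if Nat.eqb i j then 0 else 1) ltac:(lia)) as H.
    replace (S k - 1)%nat with k in H by lia. cbv beta in H. rewrite H.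
    apply Rle_trans with (sumn m (fun j => t * mu j)).
    apply sumn_le. intros j Hj. rewrite (Rmult_comm t). apply Rmult_le_compat_l; auto.
    apply (QNt_switch m); auto. rewrite sumn_scal, Hmu1. lra. }
  assert (HSB0 : 0 <= SE m mu P (S N) B).
  { apply Rle_trans with (SE m mu P (S N) (fun _ => 0)). rewrite SE_const by (auto; lia). lra.
    apply SE_le; auto. intros p _. unfold B. apply sumn_nonneg. intros; destruct Nat.eqb; lra. }
  assert (Hup : SE m mu P (S N) G <= SE m mu P (S N) (fun p => A p + (e + D / INR N * B p))).
  { apply SE_le; auto. intros p Hp. specialize (Hpt p Hp). lra. }
  assert (Hlo : SE m mu P (S N) (fun p => A p + (- e + (- (D / INR N)) * B p)) <= SE m mu P (S N) G).
  { apply SE_le; auto. intros p Hp. specialize (Hpt p Hp). lra. }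
  rewrite SE_plus, SE_plus, SE_const, SE_scal in Hup by (auto; lia).
  rewrite SE_plus, SE_plus, SE_const, SE_scal in Hlo by (auto; lia).
  rewrite HSA in Hup, Hlo.
  assert (HT : T = sumn m (fun i => mu i * F (h + beta * x i))).
  { unfold T, c. apply sumn_ext_lt. intros. rewrite Rplus_comm. reflexivity. }
  rewrite <- HT. unfold Rdist.
  assert (HDN : D / INR N < eps / 4).
  { apply (Rmult_lt_reg_r (INR N)); auto. replace (D / INR N * INR N) with D by (field; lra).
    assert (4 * D / eps * eps = 4 * D) by (field; lra). nra. }
  assert (HDB : D / INR N * SE m mu P (S N) B <= D * t).
  { apply Rle_trans with (D / INR N * (INR N * t)). apply Rmult_le_compat_l; auto.
    unfold Rdiv; apply Rmult_le_pos; [lra| left; apply Rinv_0_lt_compat; lra]. right; field; lra. }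
  assert (HDt : D * t <= eps / 4).
  { apply Rle_trans with ((D + 1) * t). nra.
    apply (Rmult_le_compat_l (D + 1)) in HtS; [|lra]. replace ((D + 1) * (eps / (4 * (D + 1)))) with (eps / 4) in HtS by (field; lra). lra. }
  assert (0 <= D / INR N) by (unfold Rdiv; apply Rmult_le_pos; [lra| left; apply Rinv_0_lt_compat; lra]).
  apply Rabs_def1; unfold e in *; nra.
Qed.
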